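(* In the 2SDI setting where Alice measures the qubit observables $A_0=\sigma_x$, $A_1=\sigma_y$ and Bob and Charlie are black boxes, the Mermin family $P^V_{MF}$ demonstrates tripartite steering (i.e. admits no 2SDI fully LHS-LHV model) whenever $V>\frac12$.
   Context: Outcomes and settings: $a,b,c,x,y,z\in\{0,1\}$. For a qubit observable $O$ with eigenvalues $\pm1$, the measurement has projectors $M_0=(\mathbb 1+O)/2$, $M_1=(\mathbb 1-O)/2$; $M^A_{a|x}$ denotes the projectors of $A_x$. Mermin family ($0<V\le1$): $P^V_{MF}(abc|xyz)=\frac{1+(-1)^{a\oplus b\oplus c\oplus xy\oplus yz\oplus xz}\,\delta_{x\oplus y\oplus1,z}\,V}{8}$. 2SDI fully LHS-LHV model: there exist probabilities $q_\lambda$, qubit states $\rho^\lambda_A$ and arbitrary conditional distributions $P_\lambda(b|y)$, $P_\lambda(c|z)$ with $P(abc|xyz)=\sum_\lambda q_\lambda \mathrm{Tr}(M^A_{a|x}\rho^\lambda_A)P_\lambda(b|y)P_\lambda(c|z)$ for all $a,b,c,x,y,z$. A correlation demonstrates tripartite steering in the 2SDI scenario iff it admits no such model. *)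

(* Defs.v *)
From Stdlib Require Import Reals.
Open Scope R_scope.

Record C := mkC { Re : R; Im : R }.
Definition C0 : C := mkC 0 0.
Definition C1 : C := mkC 1 0.
Definition Cadd (u v : C) : C := mkC (Re u + Re v) (Im u + Im v).
Definition Cmul (u v : C) : C :=
  mkC (Re u * Re v - Im u * Im v) (Re u * Im v + Im u * Re v).
Definition Cconj (u : C) : C := mkC (Re u) (- Im u).
Definition Cscale (r : R) (u : C) : C := mkC (r * Re u) (r * Im u).

(** 2x2 complex matrices, indices in {0,1} encoded as bool (false = 0, true = 1). *)
Definition mat := bool -> bool -> C.
Definition csum2 (f : bool -> C) : C := Cadd (f false) (f true).
Definition mmul (A B : mat) : mat := fun i j => csum2 (fun k => Cmul (A i k) (B k j)).
Definition mtrace (A : mat) : C := csum2 (fun i => A i i).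
Definition madd (A B : mat) : mat := fun i j => Cadd (A i j) (B i j).
Definition mscale (r : R) (A : mat) : mat := fun i j => Cscale r (A i j).

Definition id2 : mat := fun i j => if Bool.eqb i j then C1 else C0.
Definition sigma_x : mat := fun i j => if Bool.eqb i j then C0 else C1.
Definition sigma_y : mat := fun i j =>
  match i, j with
  | false, true => mkC 0 (-1)
  | true, false => mkC 0 1
  | _, _ => C0
  end.

Definition hermitian (A : mat) : Prop := forall i j, A i j = Cconj (A j i).
Definition psd (A : mat) : Prop :=
  hermitian A /\
  forall v : bool -> C,
    0 <= Re (csum2 (fun i => csum2 (fun j => Cmul (Cconj (v i)) (Cmul (A i j) (v j))))).
Definition density (rho : mat) : Prop := psd rho /\ mtrace rho = C1.

Definition sgn (b : bool) : R := if b then -1 else 1.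
Definition proj (O : mat) (a : bool) : mat := mscale (/2) (madd id2 (mscale (sgn a) O)).

Definition born (M rho : mat) : R := Re (mtrace (mmul M rho)).

Fixpoint rsum (n : nat) (f : nat -> R) : R :=
  match n with O => 0 | S m => rsum m f + f m end.

(** Tripartite correlations P(abc|xyz), outcomes and settings in {0,1} as bool. *)
Definition corr := bool -> bool -> bool -> bool -> bool -> bool -> R.

Definition mermin (V : R) : corr := fun a b c x y z =>
  (1 + sgn (xorb a (xorb b (xorb c (xorb (x && y) (xorb (y && z) (x && z))))))
       * (if Bool.eqb (negb (xorb x y)) z then 1 else 0) * V) / 8.

Definition alice_obs (x : bool) : mat := if x then sigma_y else sigma_x.

(** 2SDI fully LHS-LHV model (finitely many hidden variables lambda < n). *)
Definition fully_LHS_LHV (A : bool -> mat) (P : corr) : Prop :=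
  exists (n : nat) (q : nat -> R) (rho : nat -> mat)
         (PB : nat -> bool -> bool -> R) (PC : nat -> bool -> bool -> R),
    (forall l, (l < n)%nat -> 0 <= q l) /\ rsum n q = 1 /\
    (forall l, (l < n)%nat -> density (rho l)) /\
    (forall l b y, (l < n)%nat -> 0 <= PB l b y) /\
    (forall l y, (l < n)%nat -> PB l false y + PB l true y = 1) /\
    (forall l c z, (l < n)%nat -> 0 <= PC l c z) /\
    (forall l z, (l < n)%nat -> PC l false z + PC l true z = 1) /\
    (forall a b c x y z,
        P a b c x y z =
        rsum n (fun l => q l * born (proj (A x) a) (rho l) * PB l b y * PC l c z)).

(* Main.v *)
Require Import Defs.
From Stdlib Require Import Reals.
From Stdlib Require Import Lra Psatz.
Open Scope R_scope.

Definition sumb (f : bool -> R) : R := f false + f true.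
Definition Sexpr (P : corr) : R :=
  sumb (fun a => sumb (fun b => sumb (fun c => sgn a * sgn b * sgn c *
    (P a b c false false true + P a b c false true false + P a b c true false false
     - P a b c true true true)))).

Lemma Sexpr_add (P1 P2 : corr) :
  Sexpr (fun a b c x y z => P1 a b c x y z + P2 a b c x y z) = Sexpr P1 + Sexpr P2.
Proof. cbv [Sexpr sumb]. ring. Qed.

Lemma Sexpr_rsum n (g : nat -> corr) :
  Sexpr (fun a b c x y z => rsum n (fun l => g l a b c x y z)) = rsum n (fun l => Sexpr (g l)).
Proof.
  induction n as [|n IH].
  - cbv [Sexpr sumb rsum]. ring.
  - transitivity (Sexpr (fun a b c x y z => rsum n (fun l => g l a b c x y z) + g n a b c x y z)).
    + reflexivity.
    + rewrite Sexpr_add, IH. reflexivity.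
Qed.

Lemma rsum_le n (f g : nat -> R) :
  (forall l, (l < n)%nat -> f l <= g l) -> rsum n f <= rsum n g.
Proof.
  induction n as [|n IH]; intros H; simpl.
  - lra.
  - assert (rsum n f <= rsum n g) by (apply IH; intros; apply H; lia).
    assert (f n <= g n) by (apply H; lia). lra.
Qed.

Lemma rsum_scal n (f : nat -> R) c : rsum n (fun l => c * f l) = c * rsum n f.
Proof. induction n; simpl; [ring | rewrite IHn; ring]. Qed.

Lemma mermin_S V : Sexpr (mermin V) = 4 * V.
Proof. cbv [Sexpr sumb mermin sgn]. simpl. field.
Qed.

Definition Tx (rho : mat) := Re (mtrace (mmul sigma_x rho)).
Definition Ty (rho : mat) := Re (mtrace (mmul sigma_y rho)).
Definition Bv (PB : bool -> bool -> R) y := PB false y - PB true y.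

Lemma Sl_eq (q : R) (rho : mat) (PB PC : bool -> bool -> R) :
  Sexpr (fun a b c x y z => q * born (proj (alice_obs x) a) rho * PB b y * PC c z)
  = q * (Tx rho * (Bv PB false * Bv PC true + Bv PB true * Bv PC false)
         + Ty rho * (Bv PB false * Bv PC false - Bv PB true * Bv PC true)).
Proof.
  cbv [Sexpr sumb born proj alice_obs Tx Ty Bv mtrace mmul csum2 madd mscale id2
       sigma_x sigma_y Cadd Cmul Cscale C0 C1 sgn]. simpl. field.
Qed.

Lemma key (rho : mat) (B0 B1 C0' C1' : R) :
  density rho -> -1 <= B0 <= 1 -> -1 <= B1 <= 1 -> -1 <= C0' <= 1 -> -1 <= C1' <= 1 ->
  Tx rho * (B0 * C1' + B1 * C0') + Ty rho * (B0 * C0' - B1 * C1') <= 2.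
Proof.
  intros [[Hh Hp] Htr] HB0 HB1 HC0 HC1.
  set (u := B0 * C1' + B1 * C0'). set (w := B0 * C0' - B1 * C1').
  assert (Huw : u * u + w * w <= 4).
  { assert (E : u * u + w * w = (B0*B0 + B1*B1) * (C0'*C0' + C1'*C1')) by (unfold u, w; ring).
    rewrite E. assert (0 <= B0*B0+B1*B1 <= 2) by nra.
    assert (0 <= C0'*C0'+C1'*C1' <= 2) by nra. nra. }
  pose proof (Hp (fun i => if i then mkC (-u) (-w) else mkC 2 0)) as P1.
  pose proof (Hp (fun i => if i then mkC 1 0 else mkC 0 0)) as P2.
  pose proof (Hh false true) as H01.
  pose proof (Hh true true) as H11.
  pose proof (f_equal Re Htr) as Tr.
  clearbody u w.
  unfold Tx, Ty.
  cbv [mtrace mmul csum2 sigma_x sigma_y Cadd Cmul Cconj Defs.C0 Defs.C1] in *. simpl in *.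
  destruct (rho false false) as [a0 b0]; destruct (rho false true) as [a1 b1];
  destruct (rho true false) as [a2 b2]; destruct (rho true true) as [a3 b3].
  simpl in *. injection H01 as E1 E2. subst a1 b1. clear H11 Hp Hh Htr.
  assert (0 <= a3 * (4 - (u*u+w*w))) by (apply Rmult_le_pos; lra). nra.
Qed.

Theorem proposition8 (V : R) (HV0 : 0 < V) (HV1 : V <= 1) (HV : / 2 < V) :
  ~ fully_LHS_LHV alice_obs (mermin V).
Proof.
  intros (n & q & rho & PB & PC & Hq & Hsum & Hrho & HPB & HPB1 & HPC & HPC1 & H).
  assert (E : Sexpr (mermin V) =
     Sexpr (fun a b c x y z => rsum n (fun l => q l * born (proj (alice_obs x) a) (rho l) * PB l b y * PC l c z))).
  { cbv [Sexpr sumb]. rewrite !H. reflexivity. }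
  rewrite Sexpr_rsum, mermin_S in E.
  assert (Hle : rsum n (fun l => Sexpr (fun a b c x y z => q l * born (proj (alice_obs x) a) (rho l) * PB l b y * PC l c z))
               <= rsum n (fun l => 2 * q l)).
  { apply rsum_le. intros l Hl. rewrite Sl_eq.
    assert (Hb : forall y, -1 <= Bv (PB l) y <= 1).
    { intros y. unfold Bv. pose proof (HPB l false y Hl). pose proof (HPB l true y Hl).
      pose proof (HPB1 l y Hl). lra. }
    assert (Hc : forall y, -1 <= Bv (PC l) y <= 1).
    { intros y. unfold Bv. pose proof (HPC l false y Hl). pose proof (HPC l true y Hl).
      pose proof (HPC1 l y Hl). lra. }
    pose proof (key (rho l) _ _ _ _ (Hrho l Hl) (Hb false) (Hb true) (Hc false) (Hc true)).
    pose proof (Hq l Hl). nra. }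
  rewrite rsum_scal, Hsum in Hle. lra.
Qed.
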